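(* Let $\vartheta$ be the random period doubling substitution on $\{a,b\}$, $\vartheta\colon a\mapsto\{ab,ba\},\ b\mapsto\{aa\}$, and $X_\vartheta$ its RS-subshift. Then $\operatorname{Aut}(X_\vartheta)$ contains a subgroup isomorphic to the automorphism group $\operatorname{Aut}(X_2)$ of the full shift $X_2=\{0,1\}^{\mathbb Z}$.
   Context: A random substitution $\vartheta$ is extended to words by $\vartheta(u_0\cdots u_n)=\vartheta(u_0)\cdots\vartheta(u_n)$ (all concatenations of choices) and iterated. A word is legal if it is a subword of some word in $\vartheta^p(c)$ for a letter $c$ and $p\ge0$. The RS-subshift $X_\vartheta\subseteq\{a,b\}^{\mathbb Z}$ is the set of bi-infinite sequences all of whose finite subwords are legal, with the shift $\sigma(x)_i=x_{i+1}$; $\operatorname{Aut}(X)$ denotes the group of shift-commuting homeomorphisms of a subshift $X$. *)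

(* Defs.v *)
From HB Require Import structures.
From mathcomp Require Import all_boot all_order all_algebra.
Set Implicit Arguments. Unset Strict Implicit. Unset Printing Implicit Defensive.
Import GRing.Theory Num.Theory.

Inductive letter := a | b.

Definition letter_eqb (x y : letter) : bool :=
  match x, y with a, a | b, b => true | _, _ => false end.
Lemma letter_eqP : Equality.axiom letter_eqb.
Proof. by case; case; constructor. Qed.
HB.instance Definition _ := hasDecEq.Build letter letter_eqP.

Definition rsubst (A : Type) := A -> seq (seq A).

Fixpoint rs_word (A : Type) (th : rsubst A) (u : seq A) : seq (seq A) :=
  match u with
  | [::] => [:: [::]]
  | c :: u' => [seq x ++ y | x <- th c, y <- rs_word th u']
  end.

Definition rs_set (A : Type) (th : rsubst A) (S : seq (seq A)) : seq (seq A) :=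
  flatten (map (rs_word th) S).

Definition rs_pow (A : Type) (th : rsubst A) (p : nat) (c : A) : seq (seq A) :=
  iter p (rs_set th) [:: [:: c]].

Definition legal (A : eqType) (th : rsubst A) (w : seq A) : Prop :=
  exists (c : A) (p : nat) (v : seq A), v \in rs_pow th p c /\ infix w v.

Local Open Scope ring_scope.

Definition subword (A : Type) (x : int -> A) (i : int) (n : nat) : seq A :=
  mkseq (fun k => x (i + k%:Z)) n.

Definition RS_subshift (A : eqType) (th : rsubst A) (x : int -> A) : Prop :=
  forall (i : int) (n : nat), legal th (subword x i n).

Definition full_shift (A : Type) (x : int -> A) : Prop := True.

Definition shift (A : Type) (x : int -> A) : int -> A := fun i => x (i + 1).

(* Continuity on X (subspace of the product topology of discrete spaces),
   unfolded through the cylinder-set basis: the values of f x on the window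
   [-n,n] are determined by the values of x on some window [-m,m]. *)
Definition agree_on (A : Type) (n : nat) (x y : int -> A) : Prop :=
  forall i : int, `|i| <= n%:Z -> x i = y i.

Definition continuous_on (A B : Type) (X : (int -> A) -> Prop)
    (f : (int -> A) -> (int -> B)) : Prop :=
  forall x, X x -> forall n : nat, exists m : nat,
    forall y, X y -> agree_on m x y -> agree_on n (f x) (f y).

Definition is_aut (A : Type) (X : (int -> A) -> Prop)
    (f : (int -> A) -> (int -> A)) : Prop :=
  [/\ (forall x, X x -> X (f x)),
      (forall x, X x -> f (shift x) = shift (f x)),
      continuous_on X f &
      exists g : (int -> A) -> (int -> A),
        [/\ (forall x, X x -> X (g x)),
            continuous_on X g,
            (forall x, X x -> g (f x) = x) &
            (forall x, X x -> f (g x) = x)]].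

Definition theta_pd : rsubst letter :=
  fun c => match c with
           | a => [:: [:: a; b]; [:: b; a]]
           | b => [:: [:: a; a]]
           end.

(* Main.v *)
Require Import Defs.
From mathcomp Require Import all_boot all_order all_algebra zify ring lra.
From Stdlib Require Import FunctionalExtensionality.
Set Implicit Arguments. Unset Strict Implicit. Unset Printing Implicit Defensive.
Import GRing.Theory Num.Theory.

Lemma th_size' c u : u \in theta_pd c -> size u = 2.
Proof. case: c => /=; rewrite !inE; first by case/orP=>/eqP->. by move/eqP->. Qed.

Lemma rswP (w v : seq letter) : reflect (size v = (2 * size w)%N /\
   forall t, (t < size w)%N -> [:: nth a v (2*t); nth a v (2*t).+1] \in theta_pd (nth a w t))
  (v \in rs_word theta_pd w).
Proof.
apply: (iffP idP).
- elim: w v => [|c w IH] v /=; first by rewrite inE => /eqP->.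
  case/allpairsP => [[x y] /= [hx hy ->]].
  have sx := th_size' hx.
  have [hs ht] := IH _ hy.
  split; first by rewrite size_cat sx hs mulnS.
  case=> [|t] ht'.
  + move: hx; rewrite !nth_cat sx /=.
    by case: x sx => [|x0 [|x1 [|]]] //= _.
  + rewrite !nth_cat sx mulnS /=.
    by rewrite -addnS !addKn; apply: ht.
- elim: w v => [|c w IH] v /= [hs ht].
  + by case: v hs ht => // _ _; rewrite inE.
  apply/allpairsP.
  exists (take 2 v, drop 2 v) => /=; split; last by rewrite cat_take_drop.
  + have := ht 0%N isT; rewrite muln0 /= => h0; clear ht.
    case: v hs h0 => [|v0 [|v1 v']] /=; rewrite ?mulnS ?take0 // => _ h; exact: h.
  + apply: IH; split; first by rewrite size_drop hs mulnS addKn.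
    move=> t htw; rewrite !nth_drop.
    have := ht t.+1 htw; by rewrite mulnS.
Qed.

Lemma legal_infix u w : infix u w -> legal theta_pd w -> legal theta_pd u.
Proof.
move=> iu [c [p [v [hv iw]]]]; exists c, p, v; split => //.
exact: infix_trans iu iw.
Qed.

Lemma rs_powS p c (v : seq letter) :
  v \in rs_pow theta_pd p.+1 c <-> exists u : seq letter, u \in rs_pow theta_pd p c /\ v \in rs_word theta_pd u.
Proof.
rewrite /rs_pow iterS /rs_set; split.
- by case/flattenP => s /mapP [u hu ->] hv; exists u.
- case=> u [hu hv]; apply/flattenP; exists (rs_word theta_pd u) => //.
  by apply/mapP; exists u.
Qed.

Lemma rs_word_cat s1 s2 x y : x \in rs_word theta_pd s1 -> y \in rs_word theta_pd s2 ->
  x ++ y \in rs_word theta_pd (s1 ++ s2).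
Proof.
elim: s1 x => [|c s1 IH] x /=; first by rewrite inE => /eqP->.
case/allpairsP => [[x1 x2] /= [h1 h2 ->]] hy.
by rewrite -catA; apply: allpairs_f => //; apply: IH.
Qed.

Lemma rs_word_ex s : exists x, x \in rs_word theta_pd s.
Proof.
elim: s => [|c s [x hx]]; first by exists [::]; rewrite inE.
exists (nth [::] (theta_pd c) 0 ++ x) => /=.
apply: allpairs_f => //; by case: c.
Qed.

Lemma legal_image w v : legal theta_pd w -> v \in rs_word theta_pd w -> legal theta_pd v.
Proof.
case=> c [p [u [hu /infixP [s [t eu]]]]] hv; subst u.
have [s' hs'] := rs_word_ex s; have [t' ht'] := rs_word_ex t.
exists c, p.+1, (s' ++ v ++ t'); split; last exact: infix_infix.
apply/rs_powS; exists (s ++ w ++ t); split => //.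
by apply: rs_word_cat => //; apply: rs_word_cat.
Qed.

Lemma swap_th c x y : [:: x; y] \in theta_pd c -> [:: y; x] \in theta_pd c.
Proof. by case: c; case: x; case: y. Qed.

Lemma bb_th c : [:: b; b] \in theta_pd c = false.
Proof. by case: c. Qed.

Lemma nth_mid (s W t : seq letter) j : (j < size W)%N -> nth a (s ++ W ++ t) (size s + j) = nth a W j.
Proof. by move=> hj; rewrite nth_cat ltnNge leq_addr /= addKn nth_cat hj. Qed.

Lemma nth_out (s W W' t : seq letter) m : size W' = size W ->
  ~~ ((size s <= m)%N && (m < size s + size W)%N) ->
  nth a (s ++ W' ++ t) m = nth a (s ++ W ++ t) m.
Proof.
move=> hs; rewrite negb_and -!ltnNge => /orP [h|h].
  by rewrite !nth_cat h.
have h' : (size s <= m)%N by lia.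
rewrite !nth_cat hs.
have -> : (m < size s)%N = false by lia.
by have -> : (m - size s < size W)%N = false by lia.
Qed.

Lemma legal_flip (W W' : seq letter) : legal theta_pd W -> size W' = size W ->
 (forall j, (j < size W)%N -> nth a W' j != nth a W j ->
   exists k q : nat, [/\ (k == j) || (k.+1 == j), (k.+1 < size W)%N, (q.+1 < size W)%N,
      nth a W q == b & [/\ nth a W q.+1 == b, odd (k + q), nth a W' k = nth a W k.+1 & nth a W' k.+1 = nth a W k]]) ->
 legal theta_pd W'.
Proof.
move=> hW hsz hd.
case: (boolP [forall j : 'I_(size W), nth a W' j == nth a W j]) => [/forallP hall|].
  suff -> : W' = W by [].
  apply: (@eq_from_nth _ a) => // i; rewrite hsz => hi.
  by apply/eqP; exact: (hall (Ordinal hi)).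
rewrite negb_forall => /existsP [[j0 hj0] /= hne].
have [k0 [q0 [_ _ hq0 hb0 [hb0' _ _ _]]]] := hd j0 hj0 hne.
case: hW => c [p [v [hv hiv]]].
have [s [t ev]] : exists s t : seq letter, v = s ++ W ++ t by apply/infixP.
subst v.
case: p hv => [|p] hv.
  move: hv; rewrite /rs_pow /= inE => /eqP /(congr1 size).
  move=> e; rewrite !size_cat /= in e; lia.
have [u [hu hvu]] := (rs_powS p c _).1 hv.
exists c, p.+1, (s ++ W' ++ t); split; last exact: infix_infix.
apply/rs_powS; exists u; split => //.
move/rswP: hvu => [hs hblk].
have hpar : forall q, (q.+1 < size W)%N -> nth a W q == b -> nth a W q.+1 == b -> odd (size s + q).
  move=> q hq /eqP e1 /eqP e2; apply: contraT => ev.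
  have [t1 et1] : exists t1, size s + q = (2 * t1)%N.
    by exists (size s + q)./2; rewrite mul2n even_halfK // ev.
  have ht1 : (t1 < size u)%N.
    move: hs; rewrite !size_cat => hs'; lia.
  have := hblk t1 ht1; rewrite -et1 -addnS !nth_mid ?e1 ?e2 ?bb_th //.
  exact: ltnW.
apply/rswP; split; first by rewrite -hs !size_cat hsz.
move=> t0 ht0.
case: (boolP ((nth a (s ++ W' ++ t) (2*t0) == nth a (s ++ W ++ t) (2*t0)) &&
              (nth a (s ++ W' ++ t) (2*t0).+1 == nth a (s ++ W ++ t) (2*t0).+1))).
  by case/andP => /eqP -> /eqP ->; apply: hblk.
move=> hne2.
have [m [hm hmne]] : exists m : nat, ((m == 2 * t0) || (m == (2*t0).+1))%N /\
     nth a (s ++ W' ++ t) m != nth a (s ++ W ++ t) m.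
  move: hne2; rewrite negb_and => /orP [h|h]; [exists (2*t0)%N | exists (2*t0).+1];
  by rewrite eqxx ?orbT.
case: (boolP ((size s <= m)%N && (m < size s + size W)%N)); last first.
  by move=> hout; move: hmne; rewrite (nth_out _ hsz hout) eqxx.
case/andP => hm1 hm2.
set j := (m - size s)%N.
have em : m = (size s + j)%N by rewrite subnKC.
have hj : (j < size W)%N by rewrite -(ltn_add2l (size s)) -em.
move: hmne; rewrite em !nth_mid ?hsz // => hne3.
have [k [q [hkj hk hq hbq [hbq' hodd e1 e2]]]] := hd j hj hne3.
have hsq := hpar q hq hbq hbq'.
have hsk : ~~ odd (size s + k).
  by move: hsq hodd; rewrite !oddD; case: (odd (size s)); case: (odd k); case: (odd q).
have ek : (size s + k = 2 * t0)%N.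
  have [t2 et2] : exists t2, (size s + k = 2 * t2)%N.
    by exists (size s + k)./2; rewrite mul2n even_halfK.
  move: hm hkj; rewrite em => /orP [] /eqP hm /orP [] /eqP hk'; clear -hm hk' et2; lia.
have hk1 : (k < size W')%N by rewrite hsz ltnW.
have hk2 : (k.+1 < size W')%N by rewrite hsz.
rewrite -ek -addnS (nth_mid _ _ hk1) (nth_mid _ _ hk2) e1 e2.
apply: swap_th; have := hblk t0 ht0; rewrite -ek -addnS (nth_mid _ _ hk) (nth_mid _ _ (ltnW hk)).
by [].
Qed.

Local Open Scope ring_scope.
Import Order.TTheory.

Lemma short_legal (w : seq letter) : (size w <= 2)%N -> legal theta_pd w.
Proof.
case: w => [|x [|y [|? ?]]] // _.
- exists b, 2%N, [:: a; b; b; a]; split; by [].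
- exists b, 2%N, [:: a; b; b; a]; split; first by []. by case: x.
- case: x; case: y.
  + exists a, 2%N, [:: a; b; a; a]; split; by [].
  + exists b, 2%N, [:: a; b; b; a]; split; by [].
  + exists b, 2%N, [:: a; b; b; a]; split; by [].
  + exists b, 2%N, [:: a; b; b; a]; split; by [].
Qed.

Lemma nth_subword (z : int -> letter) i n j : (j < n)%N -> nth a (subword z i n) j = z (i + j%:Z).
Proof. by move=> hj; rewrite /subword nth_mkseq. Qed.

Lemma size_subword (z : int -> letter) i n : size (subword z i n) = n.
Proof. by rewrite /subword size_mkseq. Qed.

Lemma selfsim (Y : (int -> letter) -> Prop) :
  (forall z, Y z -> exists z', Y z' /\ exists o : int, forall k : int,
      [:: z (o + 2%:Z * k); z (o + 2%:Z * k + 1%:Z)] \in theta_pd (z' k)) ->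
  forall z, Y z -> RS_subshift theta_pd z.
Proof.
move=> H.
suff key : forall N n, (n <= N)%N -> forall z, Y z -> forall i, legal theta_pd (subword z i n).
  move=> z hz i m; exact: (key _ _ (leqnn m) z hz i).
elim=> [|N IH] n hn z hz i.
  by apply: short_legal; rewrite size_subword; apply: leq_trans hn _.
case: (leqP n 2) => hn2; first by apply: short_legal; rewrite size_subword.
have [z' [hz' [o ho]]] := H z hz.
set k0 := ((i - o) %/ 2%:Z)%Z.
set e := ((i - o) %% 2%:Z)%Z.
have ei : i = o + 2%:Z * k0 + e by have := divz_eq (i - o) 2%:Z; rewrite /k0 /e; lia.
have e0 : 0 <= e by rewrite /e modz_ge0.
have e1 : e < 2%:Z by rewrite /e ltz_pmod.
set m := ((n + 2) ./2)%N.
have hm : (m <= N)%N by rewrite /m; move: hn hn2; clear; lia.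
have hl := IH m hm z' hz' k0.
set V := subword z (o + 2%:Z * k0) (2 * m).
have hV : V \in rs_word theta_pd (subword z' k0 m).
  apply/rswP; split; first by rewrite !size_subword.
  move=> t ht; rewrite size_subword in ht.
  have h1 : (2 * t < 2 * m)%N by move: ht; clear; lia.
  have h2 : ((2 * t).+1 < 2 * m)%N by move: ht; clear; lia.
  rewrite (nth_subword _ _ h1) (nth_subword _ _ h2) (nth_subword _ _ ht).
  have E1 : o + 2%:Z * k0 + (2 * t)%N%:Z = o + 2%:Z * (k0 + t%:Z) by clear; lia.
  have E2 : o + 2%:Z * k0 + (2 * t).+1%:Z = o + 2%:Z * (k0 + t%:Z) + 1%:Z by clear; lia.
  by rewrite E1 E2; apply: ho.
have hVl := legal_image hl hV.
have [en een] : exists en : nat, e = en%:Z by exists `|e|%N; rewrite gez0_abs.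
have hen : (en <= 1)%N by move: e1; rewrite een; lia.
apply: (legal_infix _ hVl).
have -> : subword z i n = take n (drop en V).
  apply: (@eq_from_nth _ a).
    rewrite size_subword size_takel // size_drop size_subword.
    by rewrite /m; move: hen; clear; lia.
  move=> j; rewrite size_subword => hj.
  have hj2 : (en + j < 2 * m)%N by rewrite /m; move: hen hj; clear; lia.
  rewrite nth_take // nth_drop (nth_subword _ _ hj2) (nth_subword _ _ hj).
  by rewrite ei een; congr z; clear; lia.
rewrite -{2}(cat_take_drop en V) -{2}(cat_take_drop n (drop en V)).
exact: infix_infix.
Qed.

Definition Cb (x : int -> letter) (p : int) : bool :=
 [&& x (p + 0%:Z) == a, x (p + 1%:Z) == a, x (p + 2%:Z) == a, x (p + 3%:Z) == b,
     x (p + 4%:Z) != x (p + 5%:Z), x (p + 6%:Z) != x (p + 7%:Z), x (p + 8%:Z) == b,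
     x (p + 9%:Z) == a, x (p + 10%:Z) == a & x (p + 11%:Z) == a].

Lemma Cb_ext x y p : (forall k : nat, (k < 12)%N -> x (p + k%:Z) = y (p + k%:Z)) -> Cb x p = Cb y p.
Proof. by move=> h; rewrite /Cb !h. Qed.

Ltac crush := repeat match goal with
 | H : is_true (_ && _) |- _ => case/andP: H => ? ?
 | H : is_true (_ == _) |- _ => move/eqP: H => ?
 | H : is_true (~~ (_ == _)) |- _ => move/eqP: H => ?
 end; try congruence.

Lemma Sep x p p' : Cb x p -> Cb x p' -> p != p' -> (p + 9%:Z <= p') || (p' + 9%:Z <= p).
Proof.
wlog lt: p p' / p < p'.
  move=> W hp hp' ne; case: (ltrP p p') => h; first exact: W.
  rewrite orbC; apply: W => //; last by rewrite eq_sym.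
  by rewrite lt_neqAle h eq_sym ne.
move=> hp hp' _.
have [d ed] : exists d : nat, p' = p + d%:Z by exists `|p' - p|%N; lia.
case: (leqP 9 d) => hd; first by apply/orP; left; lia.
have hx : forall k : nat, x (p' + k%:Z) = x (p + (d + k)%N%:Z) by move=> k; rewrite ed -addrA -PoszD.
move: hp'; rewrite /Cb !hx; move: hp; rewrite /Cb.
have d0 : d != 0%N by apply/eqP => d0; move: lt; rewrite ed d0 addr0 ltxx.
move=> h1 h2; exfalso.
case: d {ed hx} hd d0 h2 => [|[|[|[|[|[|[|[|[|d]]]]]]]]] //= _ _; rewrite ?addSn ?add0n => h2; crush.
Qed.

Definition nxt (x : int -> letter) (s : int * bool) : int * bool :=
  if s.2 then (if Cb x (s.1 + 12%:Z) then (s.1 + 12%:Z, true) else (s.1, false))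
  else (if Cb x (s.1 - 12%:Z) then (s.1 - 12%:Z, false) else (s.1, true)).
Definition prv (x : int -> letter) (s : int * bool) : int * bool :=
  if s.2 then (if Cb x (s.1 - 12%:Z) then (s.1 - 12%:Z, true) else (s.1, false))
  else (if Cb x (s.1 + 12%:Z) then (s.1 + 12%:Z, false) else (s.1, true)).

Definition walk x s (j : int) : int * bool :=
  match j with Posz n => iter n (nxt x) s | Negz n => iter n.+1 (prv x) s end.

Definition bitx (x : int -> letter) (s : int * bool) : bool :=
  x (s.1 + (if s.2 then 4%:Z else 6%:Z)) == b.
Definition belt x s : int -> bool := fun j => bitx x (walk x s j).

Lemma prv_nxt x s : Cb x s.1 -> prv x (nxt x s) = s.
Proof.
case: s => p [] /= hp.
- rewrite /nxt /=; case: (boolP (Cb x (p + 12%:Z))) => h; rewrite /prv /=.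
  + by rewrite addrK hp.
  + by rewrite (negbTE h).
- rewrite /nxt /=; case: (boolP (Cb x (p - 12%:Z))) => h; rewrite /prv /=.
  + by rewrite subrK hp.
  + by rewrite (negbTE h).
Qed.

Lemma nxt_prv x s : Cb x s.1 -> nxt x (prv x s) = s.
Proof.
case: s => p [] /= hp.
- rewrite /prv /=; case: (boolP (Cb x (p - 12%:Z))) => h; rewrite /nxt /=.
  + by rewrite subrK hp.
  + by rewrite (negbTE h).
- rewrite /prv /=; case: (boolP (Cb x (p + 12%:Z))) => h; rewrite /nxt /=.
  + by rewrite addrK hp.
  + by rewrite (negbTE h).
Qed.

Lemma Cb_nxt x s : Cb x s.1 -> Cb x (nxt x s).1.
Proof. by case: s => p [] /= hp; rewrite /nxt /=; case: ifP. Qed.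
Lemma Cb_prv x s : Cb x s.1 -> Cb x (prv x s).1.
Proof. by case: s => p [] /= hp; rewrite /prv /=; case: ifP. Qed.

Lemma Cb_iter_nxt x s n : Cb x s.1 -> Cb x (iter n (nxt x) s).1.
Proof. by move=> h; elim: n => //= n IH; apply: Cb_nxt. Qed.
Lemma Cb_iter_prv x s n : Cb x s.1 -> Cb x (iter n (prv x) s).1.
Proof. by move=> h; elim: n => //= n IH; apply: Cb_prv. Qed.

Lemma Cb_walk x s j : Cb x s.1 -> Cb x (walk x s j).1.
Proof. case: j => n h /=; [exact: (Cb_iter_nxt n h) | exact: (Cb_iter_prv n.+1 h)]. Qed.

Lemma walk_succ x s j : Cb x s.1 -> walk x s (j + 1%:Z) = nxt x (walk x s j).
Proof.
move=> hs; case: j => [n|[|n]].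
- by have -> : Posz n + 1%:Z = Posz n.+1 by lia.
- have -> : Negz 0 + 1%:Z = Posz 0 by [].
  by rewrite /= nxt_prv.
- have -> : Negz n.+1 + 1%:Z = Negz n by rewrite !NegzE; lia.
  rewrite [walk x s (Negz n.+1)]/= nxt_prv //.
  exact: (Cb_iter_prv n.+1 hs).
Qed.

Lemma walk_pred x s j : Cb x s.1 -> walk x s (j - 1%:Z) = prv x (walk x s j).
Proof.
move=> hs; case: j => [[|n]|n].
- by have -> : Posz 0 - 1%:Z = Negz 0 by [].
- have -> : Posz n.+1 - 1%:Z = Posz n by lia.
  rewrite [walk x s (Posz n.+1)]/= prv_nxt //.
  exact: (Cb_iter_nxt n hs).
- by have -> : Negz n - 1%:Z = Negz n.+1 by rewrite !NegzE; lia.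
Qed.

Lemma walk_add x s i j : Cb x s.1 -> walk x (walk x s j) i = walk x s (i + j).
Proof.
move=> hs; have hw := Cb_walk j hs.
case: i => n.
- elim: n => [|n IH]; first by have -> : Posz 0 + j = j by lia.
  have -> : Posz n.+1 + j = (Posz n + j) + 1%:Z by lia.
  by rewrite walk_succ // -IH.
- elim: n => [|n IH].
  + have -> : Negz 0 + j = (Posz 0 + j) - 1%:Z by rewrite NegzE; lia.
    by rewrite walk_pred //; have -> : Posz 0 + j = j by lia.
  + have -> : Negz n.+1 + j = (Negz n + j) - 1%:Z by rewrite !NegzE; lia.
    rewrite walk_pred // -IH -walk_pred //.
    by have -> : Negz n - 1%:Z = Negz n.+1 by rewrite !NegzE; lia.
Qed.

Lemma belt_walk x s j : Cb x s.1 -> belt x (walk x s j) = fun i => belt x s (i + j).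
Proof. by move=> hs; apply: functional_extensionality => i; rewrite /belt walk_add. Qed.

Definition slotl (bit second : bool) : letter := if bit (+) second then b else a.
Definition newbit (phi : (int -> bool) -> int -> bool) x s := phi (belt x s) 0.

Definition PhiM (phi : (int -> bool) -> int -> bool) (M : int -> bool) (x : int -> letter) (i : int) : letter :=
  if Cb x (i - 4%:Z) then (if M (i - 4%:Z) then slotl (newbit phi x (i - 4%:Z, true)) false else x i)
  else if Cb x (i - 5%:Z) then (if M (i - 5%:Z) then slotl (newbit phi x (i - 5%:Z, true)) true else x i)
  else if Cb x (i - 6%:Z) then (if M (i - 6%:Z) then slotl (newbit phi x (i - 6%:Z, false)) false else x i)
  else if Cb x (i - 7%:Z) then (if M (i - 7%:Z) then slotl (newbit phi x (i - 7%:Z, false)) true else x i)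
  else x i.

Lemma Cb_far x p q : Cb x p -> q != p -> (q <= p + 8%:Z) -> (p - 8%:Z <= q) -> Cb x q = false.
Proof.
move=> hp hq h1 h2; apply/negP => hq'.
have := Sep hp hq'; rewrite eq_sym hq => /(_ isT) /orP [] h; lia.
Qed.

Lemma PhiM4 phi M x p : Cb x p ->
  PhiM phi M x (p + 4%:Z) = if M p then slotl (newbit phi x (p, true)) false else x (p + 4%:Z).
Proof. by move=> hp; rewrite /PhiM addrK hp. Qed.

Lemma PhiM5 phi M x p : Cb x p ->
  PhiM phi M x (p + 5%:Z) = if M p then slotl (newbit phi x (p, true)) true else x (p + 5%:Z).
Proof.
move=> hp; have f4 : Cb x (p + 5%:Z - 4%:Z) = false by apply: (Cb_far hp); lia.
by rewrite /PhiM f4 addrK hp.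
Qed.

Lemma PhiM6 phi M x p : Cb x p ->
  PhiM phi M x (p + 6%:Z) = if M p then slotl (newbit phi x (p, false)) false else x (p + 6%:Z).
Proof.
move=> hp; have f4 : Cb x (p + 6%:Z - 4%:Z) = false by apply: (Cb_far hp); lia.
have f5 : Cb x (p + 6%:Z - 5%:Z) = false by apply: (Cb_far hp); lia.
by rewrite /PhiM f4 f5 addrK hp.
Qed.

Lemma PhiM7 phi M x p : Cb x p ->
  PhiM phi M x (p + 7%:Z) = if M p then slotl (newbit phi x (p, false)) true else x (p + 7%:Z).
Proof.
move=> hp; have f4 : Cb x (p + 7%:Z - 4%:Z) = false by apply: (Cb_far hp); lia.
have f5 : Cb x (p + 7%:Z - 5%:Z) = false by apply: (Cb_far hp); lia.
have f6 : Cb x (p + 7%:Z - 6%:Z) = false by apply: (Cb_far hp); lia.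
by rewrite /PhiM f4 f5 f6 addrK hp.
Qed.

Lemma PhiM_out phi M x i : (forall p, Cb x p -> ~ ((p + 4%:Z <= i) && (i <= p + 7%:Z))) ->
  PhiM phi M x i = x i.
Proof.
move=> h; rewrite /PhiM.
case: ifP => [h4|_]; first by case: (h _ h4); apply/andP; split; lia.
case: ifP => [h4|_]; first by case: (h _ h4); apply/andP; split; lia.
case: ifP => [h4|_]; first by case: (h _ h4); apply/andP; split; lia.
case: ifP => [h4|_]; first by case: (h _ h4); apply/andP; split; lia.
by [].
Qed.

Lemma slotl_neq bit : slotl bit false != slotl bit true.
Proof. by case: bit. Qed.

Lemma PhiM_Cb1 phi M x p : Cb x p -> Cb (PhiM phi M x) p.
Proof.
move=> hp.
have hout : forall k : nat, (k < 12)%N -> (k != 4)%N -> (k != 5)%N -> (k != 6)%N -> (k != 7)%N ->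
    PhiM phi M x (p + k%:Z) = x (p + k%:Z).
  move=> k hk h4 h5 h6 h7; apply: PhiM_out => p' hp' /andP [l1 l2].
  case: (eqVneq p' p) => [e|ne].
    subst p'; move: l1 l2 h4 h5 h6 h7; clear; lia.
  have := Sep hp' hp ne; move: l1 l2 hk; clear; lia.
move: (hp); rewrite /Cb.
rewrite PhiM4 // PhiM5 // PhiM6 // PhiM7 //.
rewrite !hout //.
case: (M p); last by [].
by move=> /and5P [-> -> -> -> /and5P [_ _ -> -> /andP [-> ->]]]; rewrite !slotl_neq.
Qed.

Lemma PhiM_Cb phi M x q : Cb (PhiM phi M x) q = Cb x q.
Proof.
apply/idP/idP; last exact: PhiM_Cb1.
move=> hq'; apply: contraT => hq.
suff e : Cb x q = Cb (PhiM phi M x) q by rewrite e hq' in hq.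
apply: Cb_ext => k hk; apply/esym/PhiM_out => p hp /andP [l1 l2].
have hp' := PhiM_Cb1 phi M hp.
have ne : p != q by apply: contraNneq hq => <-.
have := Sep hp' hq' ne; move: l1 l2 hk; clear; lia.
Qed.

Lemma nxt_PhiM phi M x : nxt (PhiM phi M x) = nxt x.
Proof. by apply: functional_extensionality => s; rewrite /nxt !PhiM_Cb. Qed.
Lemma prv_PhiM phi M x : prv (PhiM phi M x) = prv x.
Proof. by apply: functional_extensionality => s; rewrite /prv !PhiM_Cb. Qed.
Lemma walk_PhiM phi M x : walk (PhiM phi M x) = walk x.
Proof.
apply: functional_extensionality => s; apply: functional_extensionality => j.
by rewrite /walk nxt_PhiM prv_PhiM.
Qed.

Lemma bitx_PhiM phi M x s : Cb x s.1 ->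
  bitx (PhiM phi M x) s = if M s.1 then newbit phi x s else bitx x s.
Proof.
case: s => p [] /= hp; rewrite /bitx /=.
- by rewrite PhiM4 //; case: (M p) => //; case: (newbit _ _ _).
- by rewrite PhiM6 //; case: (M p) => //; case: (newbit _ _ _).
Qed.

Lemma shift_belt (psi : (int -> bool) -> int -> bool) :
  (forall z, psi (shift z) = shift (psi z)) ->
  forall z (j : int), psi (fun i => z (i + j)) = fun i => psi z (i + j).
Proof.
move=> hs.
have pos : forall z (n : nat), psi (fun i => z (i + n%:Z)) = fun i => psi z (i + n%:Z).
  move=> z; elim=> [|n IH].
    have E : forall w : int -> bool, (fun i => w (i + 0%:Z)) = w.
      by move=> w; apply: functional_extensionality => i; rewrite addr0.
    by rewrite !E.
  have E1 : (fun i => z (i + n.+1%:Z)) = shift (fun i => z (i + n%:Z)).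
    by apply: functional_extensionality => i; rewrite /shift; congr z; lia.
  rewrite E1 hs IH; apply: functional_extensionality => i; rewrite /shift; congr psi; lia.
move=> z [n|n]; first exact: pos.
pose w := fun i => z (i + Negz n).
have Ez : z = fun i => w (i + n.+1%:Z).
  by apply: functional_extensionality => i; rewrite /w; congr z; rewrite NegzE; lia.
have Hz : psi z = fun i => psi w (i + n.+1%:Z) by rewrite {1}Ez pos.
rewrite Hz; apply: functional_extensionality => i.
by congr (psi w); rewrite NegzE; lia.
Qed.

Lemma PhiM_at4 phi M x i : Cb x (i - 4%:Z) ->
  PhiM phi M x i = if M (i - 4%:Z) then slotl (newbit phi x (i - 4%:Z, true)) false else x i.
Proof. by move=> h; rewrite /PhiM h. Qed.
Lemma PhiM_at5 phi M x i : Cb x (i - 4%:Z) = false -> Cb x (i - 5%:Z) ->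
  PhiM phi M x i = if M (i - 5%:Z) then slotl (newbit phi x (i - 5%:Z, true)) true else x i.
Proof. by move=> h0 h; rewrite /PhiM h0 h. Qed.
Lemma PhiM_at6 phi M x i : Cb x (i - 4%:Z) = false -> Cb x (i - 5%:Z) = false -> Cb x (i - 6%:Z) ->
  PhiM phi M x i = if M (i - 6%:Z) then slotl (newbit phi x (i - 6%:Z, false)) false else x i.
Proof. by move=> h0 h1 h; rewrite /PhiM h0 h1 h. Qed.
Lemma PhiM_at7 phi M x i : Cb x (i - 4%:Z) = false -> Cb x (i - 5%:Z) = false -> Cb x (i - 6%:Z) = false ->
  Cb x (i - 7%:Z) ->
  PhiM phi M x i = if M (i - 7%:Z) then slotl (newbit phi x (i - 7%:Z, false)) true else x i.
Proof. by move=> h0 h1 h2 h; rewrite /PhiM h0 h1 h2 h. Qed.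
Lemma PhiM_atn phi M x i : Cb x (i - 4%:Z) = false -> Cb x (i - 5%:Z) = false -> Cb x (i - 6%:Z) = false ->
  Cb x (i - 7%:Z) = false -> PhiM phi M x i = x i.
Proof. by move=> h0 h1 h2 h; rewrite /PhiM h0 h1 h2 h. Qed.

Definition T : int -> bool := fun _ => true.
Definition Phi (phi : (int -> bool) -> (int -> bool)) : (int -> letter) -> (int -> letter) :=
  PhiM phi T.

Lemma belt_Phi psi x s : (forall z, psi (shift z) = shift (psi z)) -> Cb x s.1 ->
  belt (Phi psi x) s = psi (belt x s).
Proof.
move=> hs hc; apply: functional_extensionality => j.
rewrite /belt /Phi walk_PhiM bitx_PhiM; last exact: Cb_walk.
rewrite /T /newbit -/(belt x (walk x s j)) belt_walk // shift_belt //.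
by rewrite add0r.
Qed.

Lemma Phi_hom phi psi x : (forall z, psi (shift z) = shift (psi z)) ->
  Phi (fun y => phi (psi y)) x = Phi phi (Phi psi x).
Proof.
move=> hs; apply: functional_extensionality => i.
have nb : forall s, Cb x s.1 -> newbit phi (Phi psi x) s = newbit (fun y => phi (psi y)) x s.
  by move=> s hc; rewrite /newbit belt_Phi.
have C := PhiM_Cb psi T x.
rewrite /Phi.
case h4: (Cb x (i - 4%:Z)).
  by rewrite !PhiM_at4 ?C // nb.
case h5: (Cb x (i - 5%:Z)).
  by rewrite !PhiM_at5 ?C // nb.
case h6: (Cb x (i - 6%:Z)).
  by rewrite !PhiM_at6 ?C // nb.
case h7: (Cb x (i - 7%:Z)).
  by rewrite !PhiM_at7 ?C // nb.
by rewrite !PhiM_atn ?C.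
Qed.

Lemma newbit_id x s : newbit (fun y => y) x s = bitx x s.
Proof. by []. Qed.

Lemma Phi_id x : Phi (fun y => y) x = x.
Proof.
apply: functional_extensionality => i.
rewrite /Phi.
case h4: (Cb x (i - 4%:Z)).
  rewrite PhiM_at4 // newbit_id /bitx /= subrK.
  by case: (x i).
case h5: (Cb x (i - 5%:Z)).
  rewrite PhiM_at5 // newbit_id /bitx /=.
  move: h5; rewrite /Cb => /and5P [_ _ _ _ /andP [+ _]].
  have -> : i - 5%:Z + 4%:Z = i - 1%:Z by lia.
  have -> : i - 5%:Z + 5%:Z = i by lia.
  by case: (x i); case: (x (i - 1%:Z)).
case h6: (Cb x (i - 6%:Z)).
  rewrite PhiM_at6 // newbit_id /bitx /=.
  have -> : i - 6%:Z + 6%:Z = i by lia.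
  by case: (x i).
case h7: (Cb x (i - 7%:Z)).
  rewrite PhiM_at7 // newbit_id /bitx /=.
  move: h7; rewrite /Cb => /and5P [_ _ _ _ /andP [_ /andP [+ _]]].
  have -> : i - 7%:Z + 6%:Z = i - 1%:Z by lia.
  have -> : i - 7%:Z + 7%:Z = i by lia.
  by case: (x i); case: (x (i - 1%:Z)).
by rewrite PhiM_atn.
Qed.

Lemma Cb_shift x p : Cb (shift x) p = Cb x (p + 1).
Proof. by rewrite /Cb /shift !(addrAC p _ 1). Qed.

Lemma nxt_shift x p t : nxt (shift x) (p, t) = ((nxt x (p + 1, t)).1 - 1, (nxt x (p + 1, t)).2).
Proof.
rewrite /nxt /= !Cb_shift; case: t => /=.
- have -> : p + 12%:Z + 1 = p + 1 + 12%:Z by lia.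
  by case: (Cb x (p + 1 + 12%:Z)) => /=; congr pair; lia.
- have -> : p - 12%:Z + 1 = p + 1 - 12%:Z by lia.
  by case: (Cb x (p + 1 - 12%:Z)) => /=; congr pair; lia.
Qed.

Lemma prv_shift x p t : prv (shift x) (p, t) = ((prv x (p + 1, t)).1 - 1, (prv x (p + 1, t)).2).
Proof.
rewrite /prv /= !Cb_shift; case: t => /=.
- have -> : p - 12%:Z + 1 = p + 1 - 12%:Z by lia.
  by case: (Cb x (p + 1 - 12%:Z)) => /=; congr pair; lia.
- have -> : p + 12%:Z + 1 = p + 1 + 12%:Z by lia.
  by case: (Cb x (p + 1 + 12%:Z)) => /=; congr pair; lia.
Qed.

Lemma iter_nxt_shift x p t n : iter n (nxt (shift x)) (p, t) =
  ((iter n (nxt x) (p + 1, t)).1 - 1, (iter n (nxt x) (p + 1, t)).2).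
Proof.
elim: n => [|n IH] /=; first by rewrite addrK.
rewrite IH nxt_shift subrK.
by case: (iter n (nxt x) (p + 1, t)).
Qed.

Lemma iter_prv_shift x p t n : iter n (prv (shift x)) (p, t) =
  ((iter n (prv x) (p + 1, t)).1 - 1, (iter n (prv x) (p + 1, t)).2).
Proof.
elim: n => [|n IH] /=; first by rewrite addrK.
rewrite IH prv_shift subrK.
by case: (iter n (prv x) (p + 1, t)).
Qed.

Lemma belt_shift x p t : belt (shift x) (p, t) = belt x (p + 1, t).
Proof.
apply: functional_extensionality => j; rewrite /belt /walk.
case: j => n; [rewrite iter_nxt_shift | rewrite iter_prv_shift];
  rewrite /bitx /shift /=; congr (x _ == b); lia.
Qed.

Lemma Phi_shift phi x : Phi phi (shift x) = shift (Phi phi x).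
Proof.
apply: functional_extensionality => i.
have E1 : forall q : nat, Cb (shift x) (i - q%:Z) = Cb x (i + 1 - q%:Z).
  by move=> q; rewrite Cb_shift; congr Cb; lia.
have E2 : forall (q : nat) t, newbit phi (shift x) (i - q%:Z, t) = newbit phi x (i + 1 - q%:Z, t).
  move=> q t; rewrite /newbit belt_shift.
  by have -> : i - q%:Z + 1 = i + 1 - q%:Z by lia.
rewrite /shift /Phi /PhiM /T !E1 !E2.
by [].
Qed.

Lemma Cb_loc x y p : (forall i, p <= i -> i <= p + 11%:Z -> x i = y i) -> Cb x p = Cb y p.
Proof. move=> h; apply: Cb_ext => k hk; apply: h; lia. Qed.

Lemma iter_nxt_loc (x y : int -> letter) (s : int * bool) (N : nat) :
  (forall i, `|i - s.1| <= (12 * N + 24)%N%:Z -> x i = y i) ->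
  forall n, (n <= N)%N -> iter n (nxt x) s = iter n (nxt y) s /\
     `|(iter n (nxt x) s).1 - s.1| <= (12 * n)%N%:Z.
Proof.
move=> h; elim=> [|n IH] hn /=; first by split => //; rewrite subrr.
have [e1 e2] := IH (ltnW hn).
set w := iter n (nxt x) s in e1 e2 *.
rewrite -e1.
have C1 : Cb x (w.1 + 12%:Z) = Cb y (w.1 + 12%:Z) by apply: Cb_loc => i l1 l2; apply: h; lia.
have C2 : Cb x (w.1 - 12%:Z) = Cb y (w.1 - 12%:Z) by apply: Cb_loc => i l1 l2; apply: h; lia.
rewrite /nxt -C1 -C2; split => //.
by case: (w.2); [case: (Cb x (w.1 + 12%:Z)) | case: (Cb x (w.1 - 12%:Z))] => /=; lia.
Qed.

Lemma iter_prv_loc (x y : int -> letter) (s : int * bool) (N : nat) :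
  (forall i, `|i - s.1| <= (12 * N + 24)%N%:Z -> x i = y i) ->
  forall n, (n <= N)%N -> iter n (prv x) s = iter n (prv y) s /\
     `|(iter n (prv x) s).1 - s.1| <= (12 * n)%N%:Z.
Proof.
move=> h; elim=> [|n IH] hn /=; first by split => //; rewrite subrr.
have [e1 e2] := IH (ltnW hn).
set w := iter n (prv x) s in e1 e2 *.
rewrite -e1.
have C1 : Cb x (w.1 + 12%:Z) = Cb y (w.1 + 12%:Z) by apply: Cb_loc => i l1 l2; apply: h; lia.
have C2 : Cb x (w.1 - 12%:Z) = Cb y (w.1 - 12%:Z) by apply: Cb_loc => i l1 l2; apply: h; lia.
rewrite /prv -C1 -C2; split => //.
by case: (w.2); [case: (Cb x (w.1 - 12%:Z)) | case: (Cb x (w.1 + 12%:Z))] => /=; lia.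
Qed.

Lemma belt_loc (x y : int -> letter) (s : int * bool) (N : nat) :
  (forall i, `|i - s.1| <= (12 * N + 24)%N%:Z -> x i = y i) ->
  forall j : int, `|j| <= N%:Z -> belt x s j = belt y s j.
Proof.
move=> h j hj; rewrite /belt /walk /bitx.
case: j hj => n hn.
- have hn' : (n <= N)%N by lia.
  have [e1 e2] := iter_nxt_loc h hn'.
  rewrite -e1; congr (_ == b); apply: h; case: (iter n (nxt x) s).2; lia.
- have hn' : (n.+1 <= N)%N by rewrite NegzE in hn; lia.
  have [e1 e2] := iter_prv_loc h hn'.
  rewrite -e1; congr (_ == b); apply: h; case: (iter n.+1 (prv x) s).2; lia.
Qed.

Lemma fin_max (P : int -> nat -> Prop) :
  (forall i m m', P i m -> (m <= m')%N -> P i m') -> (forall i, exists m, P i m) ->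
  forall (lo : int) (N : nat), exists M, forall i, lo <= i -> i <= lo + N%:Z -> P i M.
Proof.
move=> mono ex lo; elim=> [|N [M1 h1]].
  have [m hm] := ex lo; exists m => i l1 l2.
  by have -> : i = lo by lia.
have [m hm] := ex (lo + N.+1%:Z).
exists (maxn M1 m) => i l1 l2.
case: (lerP i (lo + N%:Z)) => hi.
  by apply: mono (h1 i l1 hi) _; apply: leq_maxl.
have -> : i = lo + N.+1%:Z by lia.
by apply: mono hm _; apply: leq_maxr.
Qed.

Lemma Phi_cont phi (X : (int -> letter) -> Prop) :
  continuous_on (@full_shift bool) phi -> continuous_on X (Phi phi).
Proof.
move=> hc x _ n.
pose P := fun (p : int) (m : nat) => forall t z', agree_on m (belt x (p, t)) z' ->
   phi z' 0 = phi (belt x (p, t)) 0.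
have mono : forall i m m', P i m -> (m <= m')%N -> P i m'.
  move=> i m m' h hm t z' ha; apply: h => k hk; apply: ha; lia.
have ex : forall i, exists m, P i m.
  move=> i; have [m1 h1] := hc (belt x (i, true)) I 0%N.
  have [m2 h2] := hc (belt x (i, false)) I 0%N.
  exists (maxn m1 m2) => t z' ha.
  case: t ha => ha.
  + symmetry; apply: (h1 z' I) => //; first by move=> k hk; apply: ha; lia.
  + symmetry; apply: (h2 z' I) => //; first by move=> k hk; apply: ha; lia.
have [M hM] := fin_max mono ex (- (n + 7)%N%:Z) (2 * n + 7)%N.
exists (12 * M + 24 + n + 8)%N => y _ ha i hi.
have hxy : forall k, `|k - i| <= (12 * M + 24 + 8)%N%:Z -> x k = y k.
  by move=> k hk; apply: ha; lia.
have C : forall q : nat, (q <= 7)%N -> Cb x (i - q%:Z) = Cb y (i - q%:Z).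
  by move=> q hq; apply: Cb_loc => k l1 l2; apply: hxy; lia.
have N : forall (q : nat) t, (4 <= q <= 7)%N -> newbit phi x (i - q%:Z, t) = newbit phi y (i - q%:Z, t).
  move=> q t /andP [q1 q2]; rewrite /newbit.
  have hP : P (i - q%:Z) M by apply: hM; lia.
  symmetry; apply: hP => k hk; apply: belt_loc hk => k' hk'; apply: hxy; move: hk'; rewrite /=; lia.
rewrite /Phi /PhiM !C // !N // hxy //; lia.
Qed.

Lemma PhiM_diff phi M x pos : PhiM phi M x pos != x pos ->
  exists p, [/\ Cb x p, M p & (p + 4%:Z <= pos) && (pos <= p + 7%:Z)].
Proof.
rewrite /PhiM.
case: ifP => h4; first by case: ifP => hm; [move=> _; exists (pos - 4%:Z); split => //; apply/andP; split; lia | rewrite eqxx].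
case: ifP => h5; first by case: ifP => hm; [move=> _; exists (pos - 5%:Z); split => //; apply/andP; split; lia | rewrite eqxx].
case: ifP => h6; first by case: ifP => hm; [move=> _; exists (pos - 6%:Z); split => //; apply/andP; split; lia | rewrite eqxx].
case: ifP => h7; first by case: ifP => hm; [move=> _; exists (pos - 7%:Z); split => //; apply/andP; split; lia | rewrite eqxx].
by rewrite eqxx.
Qed.

Lemma nthW (z : int -> letter) lo (N : nat) (kk : int) : lo <= kk -> kk < lo + N%:Z ->
  nth a (subword z lo N) `|kk - lo|%N = z kk.
Proof.
move=> h1 h2; rewrite nth_subword; last by lia.
by congr z; lia.
Qed.

Lemma letter2 (u v w : letter) : u != v -> w != u -> w = v.
Proof. by case: u; case: v; case: w. Qed.

Lemma Phi_legal phi x : RS_subshift theta_pd x -> RS_subshift theta_pd (Phi phi x).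
Proof.
move=> hx i n.
pose M := fun p : int => (i - 8%:Z <= p) && (p <= i + n%:Z).
pose x2 := PhiM phi M x.
have E : subword (Phi phi x) i n = subword x2 i n.
  apply: (@eq_from_nth _ a); first by rewrite !size_subword.
  move=> j; rewrite size_subword => hj; rewrite !nth_subword //.
  have hM : forall q : nat, (4 <= q <= 7)%N -> M (i + j%:Z - q%:Z) = true.
    by move=> q /andP [q1 q2]; rewrite /M; apply/andP; split; lia.
  by rewrite /Phi /x2 /PhiM /T !hM.
rewrite E.
pose lo := i - 12%:Z.
have hW := hx lo (n + 24)%N.
have hW' : legal theta_pd (subword x2 lo (n + 24)).
  apply: (legal_flip hW); first by rewrite !size_subword.
  move=> j; rewrite size_subword => hj hne.
  rewrite !nth_subword // in hne.
  have [p [hp hm /andP [l1 l2]]] := PhiM_diff hne.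
  move: hm; rewrite /M => /andP [m1 m2].
  have hp2 := PhiM_Cb1 phi M hp.
  have [k [hk1 hk2 hk3]] : exists k : int, [/\ (k == p + 4%:Z) || (k == p + 6%:Z),
      (k <= lo + j%:Z) && (lo + j%:Z <= k + 1) & (x k != x (k + 1)) && (x2 k != x2 (k + 1))].
    move: (hp) (hp2); rewrite /Cb => /and5P [_ _ _ _ /andP [d1 /andP [d2 _]]].
    move=> /and5P [_ _ _ _ /andP [d3 /andP [d4 _]]].
    case: (lerP (lo + j%:Z) (p + 5%:Z)) => hc.
    + exists (p + 4%:Z); split; first by rewrite eqxx.
      * by apply/andP; split; lia.
      * have e : p + 4%:Z + 1 = p + 5%:Z by lia.
        by rewrite e /x2 d1 d3.
    + exists (p + 6%:Z); split; first by rewrite eqxx orbT.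
      * by apply/andP; split; lia.
      * have e : p + 6%:Z + 1 = p + 7%:Z by lia.
        by rewrite e /x2 d2 d4.
  have [qq [hq1 hq2 hq3]] : exists qq : int, [/\ (qq == p + 3%:Z) || (qq == p + 5%:Z) || (qq == p + 7%:Z),
      x qq = b & x (qq + 1) = b].
    move: (hp); rewrite /Cb => /and5P [_ _ _ /eqP e3 /andP [d1 /andP [d2 /andP [/eqP e8 _]]]].
    case e4 : (x (p + 4%:Z)).
    * case e6 : (x (p + 6%:Z)).
      - exists (p + 7%:Z); split; first by rewrite eqxx !orbT.
        + by move: d2; rewrite e6; case: (x (p + 7%:Z)).
        + by have -> : p + 7%:Z + 1 = p + 8%:Z by lia.
      - exists (p + 5%:Z); split; first by rewrite eqxx orbT.
        + by move: d1; rewrite e4; case: (x (p + 5%:Z)).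
        + by have -> : p + 5%:Z + 1 = p + 6%:Z by lia.
    * exists (p + 3%:Z); split; first by rewrite eqxx.
      + by [].
      + by have -> : p + 3%:Z + 1 = p + 4%:Z by lia.
  move: hk2 hk3 => /andP [r1 r2] /andP [hd hd2].
  have [sw1 sw2] : x2 k = x (k + 1) /\ x2 (k + 1) = x k.
    case: (lerP (lo + j%:Z) k) => hc.
    + have ek : lo + j%:Z = k by lia.
      rewrite ek in hne.
      have s1 : x2 k = x (k + 1) by apply: letter2 hd hne.
      split => //; apply: (@letter2 (x (k + 1))); first by rewrite eq_sym.
      by rewrite -s1 eq_sym.
    + have ek : lo + j%:Z = k + 1 by lia.
      rewrite ek in hne.
      have s2 : x2 (k + 1) = x k by apply: letter2 _ hne; rewrite eq_sym.
      split => //; apply: (@letter2 (x k)) => //.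
      by rewrite -s2.
  exists `|k - lo|%N, `|qq - lo|%N.
  have kr1 : lo <= k by move: hk1 m1; rewrite /lo; case/orP => /eqP ->; lia.
  have kr2 : k + 1 < lo + (n + 24)%N%:Z by move: hk1 m2; rewrite /lo; case/orP => /eqP ->; lia.
  have qr1 : lo <= qq by move: hq1 m1; rewrite /lo; case/orP => [/orP []|] /eqP ->; lia.
  have qr2 : qq + 1 < lo + (n + 24)%N%:Z by move: hq1 m2; rewrite /lo; case/orP => [/orP []|] /eqP ->; lia.
  have Ek1 : (absz (k - lo)%R).+1 = absz ((k + 1) - lo)%R by lia.
  have Eq1 : (absz (qq - lo)%R).+1 = absz ((qq + 1) - lo)%R by lia.
  rewrite Ek1 Eq1 !nthW //; try lia.
  split.
  - by apply/orP; case: (lerP (lo + j%:Z) k) => hc; [left | right]; apply/eqP; lia.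
  - lia.
  - lia.
  - by rewrite hq2.
  split.
  - by rewrite hq3.
  - have [t et] : exists t, (`|(k - lo)%R| + `|(qq - lo)%R| = (2 * t).+1)%N.
      exists ((`|(k - lo)%R| + `|(qq - lo)%R|)./2).
      by move: hk1 hq1 m1; rewrite /lo; case/orP => /eqP ->; case/orP => [/orP []|] /eqP ->; lia.
    by rewrite et /= mul2n odd_double.
  - by [].
  - by [].
apply: (legal_infix _ hW').
have -> : subword x2 i n = take n (drop 12 (subword x2 lo (n + 24))).
  apply: (@eq_from_nth _ a).
    by rewrite size_subword size_takel // size_drop size_subword; lia.
  move=> j; rewrite size_subword => hj.
  rewrite nth_take // nth_drop !nth_subword //; last by lia.
  by congr x2; rewrite /lo; lia.
rewrite -{2}(cat_take_drop 12 (subword x2 lo (n + 24))) -{2}(cat_take_drop n (drop 12 _)).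
exact: infix_infix.
Qed.

Definition per (s : seq letter) (i : int) : letter := nth a s (absz (i %% (size s)%:Z)%Z).
Definition y3s := [:: a; a; b].
Definition y2s := [:: b; a; a; a; a; b].
Definition cellw (t : bool) : seq letter :=
  [:: a; a; a; b; (if t then b else a); (if t then a else b); a; b; b; a; a; a].
Definition xb (beta : int -> bool) (i : int) : letter :=
  nth a (cellw (beta (i %/ 12%:Z)%Z)) (absz (i %% 12%:Z)%Z).

Lemma per_at s Q (m : nat) : per s (Q * (size s)%:Z + m%:Z) = nth a s (m %% size s)%N.
Proof. by rewrite /per modzMDl modz_nat. Qed.

Lemma xb_at beta Q (m : nat) : (m < 12)%N -> xb beta (Q * 12%:Z + m%:Z) = nth a (cellw (beta Q)) m.
Proof.
move=> hm; rewrite /xb divzMDl // modzMDl divz_nat modz_nat divn_small // modn_small //.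
by rewrite addr0.
Qed.

Lemma decomp (k : int) (n : nat) : (0 < n)%N -> exists Q (r : nat), k = Q * n%:Z + r%:Z /\ (r < n)%N.
Proof.
move=> hn; exists (k %/ n%:Z)%Z, (absz (k %% n%:Z)%Z).
have h0 : 0 <= (k %% n%:Z)%Z by apply: modz_ge0; lia.
have h1 : (k %% n%:Z)%Z < n%:Z by apply: ltz_pmod; lia.
have := divz_eq k n%:Z; split; lia.
Qed.

Lemma xb_legal beta : RS_subshift theta_pd (xb beta).
Proof.
apply: (selfsim (Y := fun z => z = per y3s \/ z = per y2s \/ exists beta, z = xb beta)); last first.
  by right; right; exists beta.
move=> z [->|[->|[be ->]]].
- exists (per y3s); split; first by left.
  exists 2%:Z => k; have [Q [r [-> hr]]] := decomp k (isT : (0 < 3)%N).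
  have E1 : 2%:Z + 2%:Z * (Q * 3%:Z + r%:Z) = (2%:Z * Q) * (size y3s)%:Z + (2 + 2 * r)%N%:Z by rewrite /=; lia.
  have E2 : 2%:Z + 2%:Z * (Q * 3%:Z + r%:Z) + 1%:Z = (2%:Z * Q) * (size y3s)%:Z + (3 + 2 * r)%N%:Z by rewrite /=; lia.
  rewrite E2 E1 -[3%:Z]/((size y3s)%:Z) !per_at.
  by clear E1 E2; case: r hr => [|[|[|r]]].
- exists (per y3s); split; first by left.
  exists 4%:Z => k; have [Q [r [-> hr]]] := decomp k (isT : (0 < 3)%N).
  have E1 : 4%:Z + 2%:Z * (Q * 3%:Z + r%:Z) = Q * (size y2s)%:Z + (4 + 2 * r)%N%:Z by rewrite /=; lia.
  have E2 : 4%:Z + 2%:Z * (Q * 3%:Z + r%:Z) + 1%:Z = Q * (size y2s)%:Z + (5 + 2 * r)%N%:Z by rewrite /=; lia.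
  rewrite E2 E1 -[3%:Z]/((size y3s)%:Z) !per_at.
  by clear E1 E2; case: r hr => [|[|[|r]]].
- exists (per y2s); split; first by right; left.
  exists 0%:Z => k; have [Q [r [-> hr]]] := decomp k (isT : (0 < 6)%N).
  have E1 : 0%:Z + 2%:Z * (Q * 6%:Z + r%:Z) = Q * 12%:Z + (2 * r)%N%:Z by lia.
  have E2 : 0%:Z + 2%:Z * (Q * 6%:Z + r%:Z) + 1%:Z = Q * 12%:Z + (2 * r).+1%:Z by lia.
  rewrite E2 E1 !xb_at; try lia.
  rewrite -[6%:Z]/((size y2s)%:Z) per_at.
  by clear E1 E2; case: r hr => [|[|[|[|[|[|r]]]]]] //= _; case: (be Q).
Qed.

Lemma Cb_xb beta Q : Cb (xb beta) (Q * 12%:Z).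
Proof. by rewrite /Cb !xb_at //; case: (beta Q). Qed.

Lemma iter_nxt_xb beta Q n : iter n (nxt (xb beta)) (Q * 12%:Z, true) = ((Q + n%:Z) * 12%:Z, true).
Proof.
elim: n => [|n IH] /=; first by rewrite addr0.
rewrite IH /nxt /=.
have -> : (Q + n%:Z) * 12%:Z + 12%:Z = (Q + n.+1%:Z) * 12%:Z by lia.
by rewrite Cb_xb.
Qed.

Lemma iter_prv_xb beta Q n : iter n (prv (xb beta)) (Q * 12%:Z, true) = ((Q - n%:Z) * 12%:Z, true).
Proof.
elim: n => [|n IH] /=; first by rewrite subr0.
rewrite IH /prv /=.
have -> : (Q - n%:Z) * 12%:Z - 12%:Z = (Q - n.+1%:Z) * 12%:Z by lia.
by rewrite Cb_xb.
Qed.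

Lemma belt_xb beta : belt (xb beta) (0 * 12%:Z, true) = beta.
Proof.
apply: functional_extensionality => j; rewrite /belt /walk /bitx.
case: j => n.
- rewrite iter_nxt_xb /= xb_at //.
  have -> : 0 * 12%:Z + n%:Z = n%:Z by lia.
  by case: (beta n).
- rewrite iter_prv_xb /= xb_at //.
  have -> : 0 * 12%:Z - n.+1%:Z = Negz n by rewrite NegzE; lia.
  by case: (beta (Negz n)).
Qed.

Lemma Phi_xb phi beta : Phi phi (xb beta) 4%:Z = if phi beta 0 then b else a.
Proof.
have h : Cb (xb beta) (4%:Z - 4%:Z) by have := Cb_xb beta 0; rewrite mul0r.
rewrite /Phi PhiM_at4 // /T /newbit.
have -> : (4%:Z - 4%:Z) = 0 * 12%:Z by rewrite mul0r.
by rewrite belt_xb; case: (phi beta 0).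
Qed.

Lemma aut_shift_inv (phi g : (int -> bool) -> int -> bool) :
  (forall z, phi (shift z) = shift (phi z)) ->
  (forall z, g (phi z) = z) -> (forall z, phi (g z) = z) ->
  forall z, g (shift z) = shift (g z).
Proof.
move=> hs hgf hfg z.
by rewrite -{1}(hfg z) -hs hgf.
Qed.

Lemma main_aux :
  exists Phi : ((int -> bool) -> (int -> bool)) ->
               ((int -> letter) -> (int -> letter)),
    [/\ (forall phi, is_aut (@full_shift bool) phi ->
           is_aut (RS_subshift theta_pd) (Phi phi)),
        (forall phi psi, is_aut (@full_shift bool) phi ->
           is_aut (@full_shift bool) psi ->
           forall x, RS_subshift theta_pd x ->
             Phi (fun y => phi (psi y)) x = Phi phi (Phi psi x)) &
        (forall phi psi, is_aut (@full_shift bool) phi ->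
           is_aut (@full_shift bool) psi ->
           (forall x, RS_subshift theta_pd x -> Phi phi x = Phi psi x) ->
           phi = psi)].
Proof.
exists Phi; split.
- move=> phi [_ hsh hc [g [_ hgc hgf hfg]]].
  have hsh' : forall z, phi (shift z) = shift (phi z) by move=> z; exact: hsh.
  have hgf' : forall z, g (phi z) = z by move=> z; exact: hgf.
  have hfg' : forall z, phi (g z) = z by move=> z; exact: hfg.
  have hgs := aut_shift_inv hsh' hgf' hfg'.
  split.
  + by move=> x hx; apply: Phi_legal.
  + by move=> x _; apply: Phi_shift.
  + exact: Phi_cont.
  + exists (Phi g); split.
    * by move=> x hx; apply: Phi_legal.
    * exact: Phi_cont.
    * move=> x _; rewrite -Phi_hom //.
      have -> : (fun y => g (phi y)) = (fun y => y) by apply: functional_extensionality.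
      exact: Phi_id.
    * move=> x _; rewrite -Phi_hom //.
      have -> : (fun y => phi (g y)) = (fun y => y) by apply: functional_extensionality.
      exact: Phi_id.
- move=> phi psi _ [_ hs _ _] x _; apply: Phi_hom => z; exact: hs.
- move=> phi psi [_ hs1 _ _] [_ hs2 _ _] he.
  have h0 : forall beta, phi beta 0 = psi beta 0.
    move=> beta; have := congr1 (fun f => f 4%:Z) (he _ (xb_legal beta)).
    by rewrite /= !Phi_xb; case: (phi beta 0); case: (psi beta 0).
  apply: functional_extensionality => beta; apply: functional_extensionality => j.
  have s1 := shift_belt (psi := phi) (fun z => hs1 z I) beta j.
  have s2 := shift_belt (psi := psi) (fun z => hs2 z I) beta j.
  have := congr1 (fun f => f 0) s1; have := congr1 (fun f => f 0) s2.
  rewrite /= add0r => <- <-; exact: h0.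
Qed.

Close Scope ring_scope.

Theorem corollary6p13 :
  exists Phi : ((int -> bool) -> (int -> bool)) ->
               ((int -> letter) -> (int -> letter)),
    [/\ (forall phi, is_aut (@full_shift bool) phi ->
           is_aut (RS_subshift theta_pd) (Phi phi)),
        (forall phi psi, is_aut (@full_shift bool) phi ->
           is_aut (@full_shift bool) psi ->
           forall x, RS_subshift theta_pd x ->
             Phi (fun y => phi (psi y)) x = Phi phi (Phi psi x)) &
        (forall phi psi, is_aut (@full_shift bool) phi ->
           is_aut (@full_shift bool) psi ->
           (forall x, RS_subshift theta_pd x -> Phi phi x = Phi psi x) ->
           phi = psi)].
Proof. exact: main_aux. Qed.
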